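(* Let $k\ge 1$ and let $n_1,\ldots,n_k\ge 3$ be (not necessarily distinct) integers. Then the direct product $C_{n_1}\times\cdots\times C_{n_k}$ is $\mathbb{Z}_{n_1\cdots n_k}$-distance antimagic if and only if all of $n_1,\ldots,n_k$ are odd. In particular, for every $d\ge 1$ and odd $n\ge 3$, the direct product of $d$ copies of $C_n$ is $\mathbb{Z}_{n^d}$-distance antimagic.
   Context: $C_n$ is the cycle of length $n$. The direct product $G_1\times\cdots\times G_k$ has vertex set $V(G_1)\times\cdots\times V(G_k)$, with $(x_1,\ldots,x_k)$ and $(y_1,\ldots,y_k)$ adjacent iff $x_iy_i\in E(G_i)$ for every $i$. For a graph $G$ with $n$ vertices, a $\mathbb{Z}_n$-distance antimagic labelling is a bijection $f:V(G)\to\mathbb{Z}_n$ such that the weights $w_f(x)=\sum_{y\in N(x)} f(y)$ (mod $n$, $N(x)$ the open neighbourhood) are pairwise distinct; $G$ is $\mathbb{Z}_n$-distance antimagic if such a labelling exists. *)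

(* Defs.v *)
From mathcomp Require Import all_boot.
Set Implicit Arguments. Unset Strict Implicit. Unset Printing Implicit Defensive.

Definition cycle_adj (n : nat) (x y : 'I_n) : bool :=
  (y == (x.+1 %% n) :> nat) || (x == (y.+1 %% n) :> nat).

Definition prod_vertex (k : nat) (n : 'I_k -> nat) : finType :=
  {dffun forall i : 'I_k, 'I_(n i)}.

Definition prod_adj (k : nat) (n : 'I_k -> nat) (x y : prod_vertex n) : bool :=
  [forall i : 'I_k, cycle_adj (x i) (y i)].

(* Z_m-distance antimagic: a bijection f : V -> Z_m (here Z_m represented by 'I_m,
   with arithmetic mod m) whose weights w(x) = sum_{y in N(x)} f(y) mod m are
   pairwise distinct. *)
Definition Zdist_antimagic (V : finType) (adj : V -> V -> bool) (m : nat) : Prop :=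
  exists f : V -> 'I_m, bijective f /\
    injective (fun x : V => (\sum_(y : V | adj x y) (f y : nat)) %% m).

Definition prod_cycles_Zantimagic (k : nat) (n : 'I_k -> nat) : Prop :=
  Zdist_antimagic (@prod_adj k n) (\prod_(i < k) n i).

(* Main.v *)
Require Import Defs.
From mathcomp Require Import all_boot.
From mathcomp Require Import zify.
Set Implicit Arguments. Unset Strict Implicit. Unset Printing Implicit Defensive.

Definition sc (N t : nat) := if t.+1 == N then 0 else t.+1.
Definition pd (N t : nat) := if t == 0 then N.-1 else t.-1.
Lemma sc_lt N t : t < N -> sc N t < N.
Proof. rewrite /sc; case: eqP; lia. Qed.
Lemma pd_lt N t : t < N -> pd N t < N.
Proof. rewrite /pd; case: eqP; lia. Qed.
Definition scO N (t : 'I_N) : 'I_N := Ordinal (sc_lt (ltn_ord t)).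
Definition pdO N (t : 'I_N) : 'I_N := Ordinal (pd_lt (ltn_ord t)).

Lemma modS_sc N t : t < N -> t.+1 %% N = sc N t.
Proof.
move=> h; rewrite /sc; case: eqP => [->|ne]; first by rewrite modnn.
by rewrite modn_small //; lia.
Qed.

Lemma cyc_adjE N (t u : 'I_N) : cycle_adj t u = (u == scO t) || (u == pdO t).
Proof.
have tl := ltn_ord t; have ul := ltn_ord u.
rewrite /cycle_adj !modS_sc //.
have -> : (t == sc N u :> nat) = (u == pdO t) by rewrite -val_eqE /=; apply/eqP/eqP; rewrite /sc /pd; case: eqP; case: eqP; lia.
by [].
Qed.

Lemma sc_pd N (t : 'I_N) : 2 < N -> scO t != pdO t.
Proof. move=> h; have tl := ltn_ord t. rewrite -val_eqE /=; apply/eqP; rewrite /sc /pd; do 2 case: eqP; lia. Qed.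
Lemma sc_pdK N (t : 'I_N) : scO (pdO t) = t.
Proof. have tl := ltn_ord t; apply/val_inj => /=; rewrite /sc /pd; do 2 case: eqP; lia. Qed.
Lemma pd_scK N (t : 'I_N) : pdO (scO t) = t.
Proof. have tl := ltn_ord t; apply/val_inj => /=; rewrite /sc /pd; do 2 case: eqP; lia. Qed.
Lemma scpd_mod N (t : 'I_N) : sc N t + pd N t = 2 * t %[mod N].
Proof.
have tl := ltn_ord t; rewrite /sc /pd; case: eqP => h1; case: eqP => h2.
- lia.
- have -> : 2 * t = t.-1 + N by lia. by rewrite add0n modnDr.
- rewrite h2 muln0 mod0n; have -> : 1 + N.-1 = N by lia. by rewrite modnn.
- congr (_ %% _); lia.
Qed.

Definition nbv k (n : 'I_k -> nat) (x : prod_vertex n) (e : {ffun 'I_k -> bool}) : prod_vertex n :=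
  finfun (fun i => if e i then scO (x i) else pdO (x i)).

Lemma nbvE k (n : 'I_k -> nat) (x : prod_vertex n) e i :
  nbv x e i = if e i then scO (x i) else pdO (x i).
Proof. by rewrite /nbv ffunE. Qed.

Definition negf k (e : {ffun 'I_k -> bool}) : {ffun 'I_k -> bool} := [ffun i => ~~ e i].

Lemma nbvK k (n : 'I_k -> nat) e : cancel (fun x : prod_vertex n => nbv x e) (fun x => nbv x (negf e)).
Proof.
move=> x; apply/ffunP => i; rewrite !nbvE /negf ffunE.
by case: (e i) => /=; rewrite ?sc_pdK ?pd_scK.
Qed.

Lemma nbv_inj k (n : 'I_k -> nat) (x : prod_vertex n) :
  (forall i, 3 <= n i) -> injective (nbv x).
Proof.
move=> h3 e1 e2 /ffunP E; apply/ffunP => i; move: (E i); rewrite !nbvE.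
have := sc_pd (x i) (h3 i).
by case: (e1 i); case: (e2 i) => // /negP + H; rewrite H ?eqxx.
Qed.

Lemma adj_nbv k (n : 'I_k -> nat) (x y : prod_vertex n) :
  prod_adj x y = [exists e, y == nbv x e].
Proof.
apply/forallP/existsP => [H|[e /eqP ->] i].
- exists [ffun i => y i == scO (x i)]; apply/eqP/ffunP => i.
  rewrite nbvE ffunE; case: eqP => // ne.
  by move: (H i); rewrite cyc_adjE => /orP [/eqP//|/eqP].
- by rewrite nbvE cyc_adjE; case: (e i); rewrite eqxx ?orbT.
Qed.

Lemma sum_adj k (n : 'I_k -> nat) (x : prod_vertex n) (G : prod_vertex n -> nat) :
  (forall i, 3 <= n i) ->
  \sum_(y | prod_adj x y) G y = \sum_(e : {ffun 'I_k -> bool}) G (nbv x e).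
Proof.
move=> h3.
rewrite (eq_bigl (fun y => y \in [set nbv x e | e in [set: {ffun 'I_k -> bool}]])).
  rewrite big_imset /=; last by move=> a b _ _; apply: nbv_inj.
  by apply: eq_bigl => e; rewrite in_setT.
move=> y; rewrite adj_nbv; apply/existsP/imsetP => [[e /eqP ->]|[e _ ->]]; first by exists e.
by exists e.
Qed.

Lemma card_V k (n : 'I_k -> nat) : #|prod_vertex n| = \prod_(i < k) n i.
Proof.
rewrite card_dep_ffun foldrE big_image /=; apply: eq_bigr => i _; exact: card_ord. Qed.

Lemma sum_coord k (i : 'I_k) (h : bool -> nat) :
  2 * \sum_(e : {ffun 'I_k -> bool}) h (e i) = 2 ^ k * (h true + h false).
Proof.
pose tg (e : {ffun 'I_k -> bool}) : {ffun 'I_k -> bool} := [ffun l => if l == i then ~~ e l else e l].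
have tgK : involutive tg by move=> e; apply/ffunP => l; rewrite !ffunE; case: eqP => // _; rewrite negbK.
rewrite mul2n -addnn {2}(reindex_inj (inv_inj tgK)) /= -big_split /=.
rewrite (eq_bigr (fun _ => h true + h false)); last first.
  by move=> e _; rewrite ffunE eqxx; case: (e i) => //; rewrite addnC.
by rewrite sum_nat_const cardT -cardE card_ffun card_bool card_ord.
Qed.

Definition Mw k (n : 'I_k -> nat) (i : 'I_k) := \prod_(l < k | l < i) n l.

Lemma prod_sub_dvd k (P Q : pred 'I_k) (F : 'I_k -> nat) :
  (forall i, P i -> Q i) -> \prod_(i | P i) F i %| \prod_(i | Q i) F i.
Proof.
move=> PQ; rewrite [X in _ %| X](bigID P) /=.
rewrite (eq_bigl P) ?dvdn_mulr // => i.
by case Pi: (P i); rewrite ?andbT ?andbF ?PQ.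
Qed.

Lemma split3 k (j : nat) (i : 'I_k) (F : 'I_k -> nat) : val i = j ->
  \sum_l F l = \sum_(l : 'I_k | l < j) F l + F i + \sum_(l : 'I_k | j < l) F l.
Proof.
move=> ij; rewrite (bigID (fun l : 'I_k => l < j)) /= [X in _ + X = _](bigD1 i) /=; last by rewrite ij ltnn.
rewrite addnA; congr (_ + _); apply: eq_bigl => l.
rewrite -val_eqE /= ij; case: ltngtP => //.
Qed.

Lemma digit k (n : 'I_k -> nat) (npos : forall i, 0 < n i) (g : forall i, 'I_(n i) -> nat)
  (ginj : forall i (t t' : 'I_(n i)), g i t = g i t' %[mod n i] -> t = t') (x x' : prod_vertex n) :
  \sum_i Mw n i * g i (x i) = \sum_i Mw n i * g i (x' i) %[mod \prod_(i < k) n i] -> x = x'.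
Proof.
move=> H.
suff P : forall j, forall i : 'I_k, i < j -> x i = x' i.
  by apply/ffunP => i; apply: (P k i (ltn_ord i)).
elim=> [//|j IH] i; rewrite ltnS leq_eqVlt => /orP [/eqP ij|]; last exact: IH.
set N := \prod_(l < k | l < j.+1) n l.
have Mpos : 0 < Mw n i by apply: prodn_gt0.
have MN : Mw n i * n i = N.
  rewrite /N (bigD1 i) /=; last by rewrite ij.
  rewrite mulnC; congr (_ * _); apply: eq_bigl => l.
  by rewrite -val_eqE /= ij ltnS; case: ltngtP.
have Nm : N %| \prod_(i < k) n i by apply: prod_sub_dvd.
have NM : forall l : 'I_k, j < l -> N %| Mw n l.
  by move=> l jl; apply: prod_sub_dvd => l' /= h; apply: leq_trans jl.
move: H => /(congr1 (fun z => z %% N)); rewrite !modn_dvdm //.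
rewrite (split3 (fun l => Mw n l * g l (x l)) ij) (split3 (fun l => Mw n l * g l (x' l)) ij).
rewrite -modnDmr -[in X in _ = X]modnDmr.
rewrite (eqP (dvdn_sum _ (fun l jl => dvdn_mulr _ (NM l jl)))).
rewrite (eqP (dvdn_sum _ (fun l jl => dvdn_mulr _ (NM l jl)))) !addn0.
rewrite (eq_bigr (fun l => Mw n l * g l (x' l))); last by move=> l lj; rewrite IH.
move/eqP; rewrite eqn_modDl -MN -!muln_modr eqn_pmul2l // => /eqP.
exact: ginj.
Qed.

Lemma cancel_mod c a b d : coprime c d -> c * a = c * b %[mod d] -> a = b %[mod d].
Proof.
wlog ab : a b / a <= b.
  move=> W cop; case: (leqP a b) => [ab|/ltnW ba]; first exact: W.
  by move=> /esym h; apply/esym; apply: W.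
move=> cop /esym/eqP; rewrite eqn_mod_dvd ?leq_mul2l ?ab ?orbT // -mulnBr Gauss_dvdr.
  by move=> h; apply/esym/eqP; rewrite eqn_mod_dvd.
by rewrite coprime_sym.
Qed.

Lemma weight2 k (n : 'I_k -> nat) (x : prod_vertex n) :
  2 * \sum_(e : {ffun 'I_k -> bool}) \sum_i Mw n i * nbv x e i =
  2 ^ k * \sum_i Mw n i * (sc (n i) (x i) + pd (n i) (x i)).
Proof.
rewrite exchange_big /= !big_distrr /=; apply: eq_bigr => i _.
rewrite -big_distrr /= mulnCA.
rewrite (eq_bigr (fun e : {ffun 'I_k -> bool} => (fun b => val (if b then scO (x i) else pdO (x i))) (e i))); last by move=> e _; rewrite nbvE.
have := sum_coord i (fun b => val (if b then scO (x i) else pdO (x i))); rewrite /= => ->.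
by rewrite mulnCA.
Qed.

Lemma if_dir k (n : 'I_k -> nat) : (forall i, 3 <= n i) -> (forall i, odd (n i)) ->
  prod_cycles_Zantimagic n.
Proof.
move=> h3 hodd.
have npos : forall i, 0 < n i by move=> i; apply: leq_trans (h3 i).
set m := \prod_(i < k) n i.
have mpos : 0 < m by apply: prodn_gt0.
have modd : odd m by rewrite /m; elim/big_ind: _ => //= a b; rewrite oddM => -> ->.
pose F (x : prod_vertex n) := \sum_i Mw n i * x i.
pose f x : 'I_m := Ordinal (ltn_pmod (F x) mpos).
have finj : injective f.
  move=> x x' /(congr1 val) /= E.
  apply: (digit npos (g := fun i t => val t)) => // i t t'.
  by rewrite !modn_small ?ltn_ord // => /val_inj.
exists f; split.
  by apply: (inj_card_bij finj); rewrite card_V card_ord.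
have key : forall x, (\sum_(y | prod_adj x y) f y) %% m =
    (\sum_(e : {ffun 'I_k -> bool}) F (nbv x e)) %% m.
  by move=> x; rewrite (sum_adj _ _ h3) -[RHS]modn_summ.
move=> x x' /= E.
have E1 : (\sum_e F (nbv x e)) %% m = (\sum_e F (nbv x' e)) %% m by rewrite -!key.
have E2 : (2 * \sum_e F (nbv x e)) %% m = (2 * \sum_e F (nbv x' e)) %% m.
  by rewrite -modnMmr E1 modnMmr.
move: E2; rewrite /F !weight2 => /cancel_mod E2.
apply: (digit npos (g := fun i t => sc (n i) t + pd (n i) t)); last first.
  by apply: E2; rewrite coprimeXl // coprime2n.
move=> i t t'; rewrite !scpd_mod => /cancel_mod; rewrite coprime2n hodd => /(_ isT).
by rewrite !modn_small ?ltn_ord // => /val_inj.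
Qed.

Lemma onlyif k (n : 'I_k -> nat) : 0 < k -> (forall i, 3 <= n i) ->
  prod_cycles_Zantimagic n -> forall i, odd (n i).
Proof.
move=> k0 h3 [f [fbij winj]] i; apply/negPn/negP => ev.
set m := \prod_(i < k) n i in f fbij winj.
have npos : forall i, 0 < n i by move=> l; apply: leq_trans (h3 l).
have mpos : 0 < m by apply: prodn_gt0.
have mev : 2 %| m.
  apply: (@dvdn_trans (n i)); first by rewrite dvdn2.
  by rewrite /m (bigD1 i) //= dvdn_mulr.
pose W x : 'I_m := Ordinal (ltn_pmod (\sum_(y | prod_adj x y) f y) mpos).
have Wbij : bijective W.
  apply: inj_card_bij; last by rewrite card_V card_ord.
  by move=> x x' /(congr1 val) /= /winj.
pose S := \sum_(r : 'I_m) val r.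
have SW : S = \sum_x val (W x) by rewrite /S (reindex W) //; exact: onW_bij.
have Sf : S = \sum_x val (f x) by rewrite /S (reindex f) //; exact: onW_bij.
have E : S = 2 ^ k * S %[mod m].
  rewrite {1}SW modn_summ /=.
  rewrite (eq_bigr (fun x => \sum_(e : {ffun 'I_k -> bool}) val (f (nbv x e)))); last first.
    by move=> x _; rewrite (sum_adj _ _ h3).
  rewrite exchange_big /=.
  rewrite (eq_bigr (fun _ => S)); last first.
    by move=> e _; rewrite Sf [RHS](reindex_inj (can_inj (nbvK e))).
  by rewrite sum_nat_const cardT -cardE card_ffun card_bool card_ord.
have SC : S = 'C(m, 2) by rewrite /S -bin2_sum big_mkord.
move/dvdnP: mev => [a ma].
have a0 : 0 < a by move: (mpos); rewrite ma; lia.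
have Sa : S = (a - 1) * (a * 2) + a.
  rewrite SC ma bin2.
  have -> : a * 2 * (a * 2).-1 = (a * (a * 2).-1).*2 by rewrite -muln2; lia.
  rewrite doubleK; nia.
move: E; rewrite ma {1}Sa modnMDl modn_small; last lia.
have -> : 2 ^ k = 2 ^ k.-1 * 2 by rewrite -expnSr prednK.
rewrite Sa.
have X2 : 2 * ((a - 1) * (a * 2) + a) = (a * 2 - 1) * (a * 2) by nia.
rewrite -mulnA X2 mulnA modnMl; lia.
Qed.

Unset Implicit Arguments.
Theorem mainTheorem15 (k : nat) (n : 'I_k -> nat) :
  1 <= k -> (forall i, 3 <= n i) ->
  (prod_cycles_Zantimagic n <-> (forall i, odd (n i))) /\
  (forall (d m : nat), 1 <= d -> 3 <= m -> odd m ->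
     prod_cycles_Zantimagic (fun _ : 'I_d => m)).
Proof.
move=> k1 h3; split; first by split; [exact: onlyif | exact: if_dir].
by move=> d m _ m3 mo; apply: if_dir.
Qed.
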